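(* Let $|\mathcal{T}|=2$ and let $P\in\Delta_{\mathcal{T},\mathcal{X},\mathcal{Y}}$ be such that $\operatorname{supp}(\Delta_P)=\mathcal{T}\times\mathcal{X}\times\mathcal{Y}$. Suppose $\tilde Q$ lies in the relative interior of $\Delta_P$ and $\tilde Q\in\arg\max_{Q\in\Delta_P}H_Q(T\mid X,Y)$. Then under $\tilde Q$, $T$ is conditionally independent of $X$ given $Y$, or $T$ is conditionally independent of $Y$ given $X$ (or both). Consequently $UI(T:X\setminus Y)=0$ or $UI(T:Y\setminus X)=0$.
   Context: $T,X,Y$ are random variables with finite state spaces $\mathcal{T},\mathcal{X},\mathcal{Y}$; $\Delta_{\mathcal{T},\mathcal{X},\mathcal{Y}}$ is the set of all joint distributions on $\mathcal{T}\times\mathcal{X}\times\mathcal{Y}$. For $P\in\Delta_{\mathcal{T},\mathcal{X},\mathcal{Y}}$, $\Delta_P=\{Q\in\Delta_{\mathcal{T},\mathcal{X},\mathcal{Y}}: Q(X=x,T=t)=P(X=x,T=t),\ Q(Y=y,T=t)=P(Y=y,T=t)\ \forall x,y,t\}$ and $\operatorname{supp}(\Delta_P)=\bigcup_{Q\in\Delta_P}\operatorname{supp}(Q)$. $UI(T:X\setminus Y)=\min_{Q\in\Delta_P}I_Q(T:X\mid Y)$, and $UI(T:Y\setminus X)=\min_{Q\in\Delta_P}I_Q(T:Y\mid X)$ (note $\Delta_P$ is symmetric in $X,Y$). *)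

(* Defs.v *)
From mathcomp Require Import all_boot.
From Stdlib Require Import Reals.

Set Implicit Arguments.
Unset Strict Implicit.
Unset Printing Implicit Defensive.

Local Open Scope R_scope.

Definition sumR (I : finType) (F : I -> R) : R := \big[Rplus/0]_(i : I) F i.

Section Info.
Variables (T X Y : finType).

Definition jdist := T -> X -> Y -> R.

Definition is_dist (Q : jdist) : Prop :=
  (forall t x y, 0 <= Q t x y) /\ sumR (fun t => sumR (fun x => sumR (fun y => Q t x y))) = 1.

Definition mTX (Q : jdist) t x := sumR (fun y => Q t x y).
Definition mTY (Q : jdist) t y := sumR (fun x => Q t x y).
Definition mXY (Q : jdist) x y := sumR (fun t => Q t x y).
Definition mX (Q : jdist) x := sumR (fun t => sumR (fun y => Q t x y)).
Definition mY (Q : jdist) y := sumR (fun t => sumR (fun x => Q t x y)).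

Definition DeltaP (P Q : jdist) : Prop :=
  is_dist Q /\ (forall t x, mTX Q t x = mTX P t x) /\ (forall t y, mTY Q t y = mTY P t y).

Definition full_supp_DeltaP (P : jdist) : Prop :=
  forall t x y, exists Q, DeltaP P Q /\ 0 < Q t x y.

(* affine hull of Delta_P: all finite affine combinations of its elements *)
Definition aff_comb (l : seq (R * jdist)) : jdist :=
  fun t x y => \big[Rplus/0]_(p <- l) (fst p * snd p t x y).

Definition in_aff_DeltaP (P Q : jdist) : Prop :=
  exists l : seq (R * jdist),
    (forall p, List.In p l -> DeltaP P (snd p)) /\
    \big[Rplus/0]_(p <- l) fst p = 1 /\
    Q = aff_comb l.

(* relative interior: interior of Delta_P relative to its affine hull
   (w.r.t. the sup-norm on R^(T x X x Y)) *)
Definition rel_interior_DeltaP (P Q : jdist) : Prop :=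
  DeltaP P Q /\
  exists eps, 0 < eps /\
    forall Q', in_aff_DeltaP P Q' ->
      (forall t x y, Rabs (Q' t x y - Q t x y) < eps) -> DeltaP P Q'.

(* conditional entropy H_Q(T | X, Y), with 0 log 0 = 0 (natural log) *)
Definition condH_T_XY (Q : jdist) : R :=
  - sumR (fun t => sumR (fun x => sumR (fun y =>
      if Rlt_dec 0 (Q t x y) then Q t x y * ln (Q t x y / mXY Q x y) else 0))).

(* conditional mutual informations (natural log), summing over the support *)
Definition condI_TX_Y (Q : jdist) : R :=
  sumR (fun t => sumR (fun x => sumR (fun y =>
    if Rlt_dec 0 (Q t x y)
    then Q t x y * ln ((Q t x y * mY Q y) / (mTY Q t y * mXY Q x y)) else 0))).

Definition condI_TY_X (Q : jdist) : R :=
  sumR (fun t => sumR (fun x => sumR (fun y =>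
    if Rlt_dec 0 (Q t x y)
    then Q t x y * ln ((Q t x y * mX Q x) / (mTX Q t x * mXY Q x y)) else 0))).

Definition CI_TX_given_Y (Q : jdist) : Prop :=
  forall t x y, Q t x y * mY Q y = mTY Q t y * mXY Q x y.
Definition CI_TY_given_X (Q : jdist) : Prop :=
  forall t x y, Q t x y * mX Q x = mTX Q t x * mXY Q x y.

Definition is_min_value (S : R -> Prop) (r : R) : Prop :=
  S r /\ forall s, S s -> r <= s.

Definition UI_X_minus_Y (P : jdist) (r : R) : Prop :=
  is_min_value (fun s => exists Q, DeltaP P Q /\ s = condI_TX_Y Q) r.
Definition UI_Y_minus_X (P : jdist) (r : R) : Prop :=
  is_min_value (fun s => exists Q, DeltaP P Q /\ s = condI_TY_X Q) r.

End Info.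

(* Main.v *)
From HB Require Import structures.
Require Import Defs.
From mathcomp Require Import all_boot.
From Stdlib Require Import Reals Lra FunctionalExtensionality Classical.
Set Implicit Arguments.
Local Open Scope R_scope.

HB.instance Definition _ := Monoid.isComLaw.Build R 0 Rplus (fun a b c => esym (Rplus_assoc a b c)) Rplus_comm Rplus_0_l.

Section S.
Variable I J : finType.

Lemma sumR_ext (F G : I -> R) : (forall i, F i = G i) -> sumR F = sumR G.
Proof. move=> H; rewrite /sumR; apply: eq_bigr => i _; exact: H. Qed.

Lemma sumR_add (F G : I -> R) : sumR (fun i => F i + G i) = sumR F + sumR G.
Proof. by rewrite /sumR big_split. Qed.

Lemma sumR_scal c (F : I -> R) : sumR (fun i => c * F i) = c * sumR F.
Proof. rewrite /sumR; elim/big_rec2: _ => [|i y1 y2 _ ->]; ring. Qed.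

Lemma sumR_sub (F G : I -> R) : sumR (fun i => F i - G i) = sumR F - sumR G.
Proof.
rewrite (@sumR_ext _ (fun i => F i + (-1) * G i)); last by move=> i; ring.
rewrite sumR_add sumR_scal; ring. Qed.

Lemma sumR_0 : sumR (fun _ : I => 0) = 0.
Proof. by rewrite /sumR big1. Qed.

Lemma sumR_exch (F : I -> J -> R) :
  sumR (fun i => sumR (fun j => F i j)) = sumR (fun j => sumR (fun i => F i j)).
Proof. by rewrite /sumR exchange_big. Qed.

Lemma sumR_ge0 (F : I -> R) : (forall i, 0 <= F i) -> 0 <= sumR F.
Proof. move=> H; rewrite /sumR; elim/big_rec: _ => [|i y _ Hy]; [lra|]. have := H i; lra. Qed.

Lemma sumR_le (F G : I -> R) : (forall i, F i <= G i) -> sumR F <= sumR G.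
Proof. move=> H; rewrite /sumR; elim/big_rec2: _ => [|i y1 y2 _ Hy]; [lra|]. have := H i; lra. Qed.

Lemma term_le_sumR (F : I -> R) i : (forall i, 0 <= F i) -> F i <= sumR F.
Proof.
move=> H; rewrite /sumR (bigD1 i) //=.
have: 0 <= \big[Rplus/0]_(j | j != i) F j.
  elim/big_rec: _ => [|j y _ Hy]; [lra|]. have := H j; lra.
lra. Qed.

Definition e (a i : I) : R := if a == i then 1 else 0.

Lemma sumR_e a (F : I -> R) : sumR (fun i => e a i * F i) = F a.
Proof.
rewrite /sumR (bigD1 a) //= /e eqxx big1; first ring.
move=> i; rewrite eq_sym => /negbTE ->; ring. Qed.

Lemma sumR_e1 a : sumR (fun i => e a i) = 1.
Proof. rewrite -(sumR_e a (fun _ => 1)); apply: sumR_ext => i; ring. Qed.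

Lemma sumR_de a b (F : I -> R) : sumR (fun i => (e a i - e b i) * F i) = F a - F b.
Proof.
rewrite (@sumR_ext _ (fun i => e a i * F i - e b i * F i)); last by move=> i; ring.
by rewrite sumR_sub !sumR_e. Qed.

End S.
Arguments e {I}.

Lemma deriv_big (A : Type) (r : seq A) (F : A -> R -> R) (F' : A -> R) x :
  (forall i, derivable_pt_lim (F i) x (F' i)) ->
  derivable_pt_lim (fun s => \big[Rplus/0]_(i <- r) F i s) x (\big[Rplus/0]_(i <- r) F' i).
Proof.
move=> H; elim: r => [|a r IH].
  have -> : (fun s => \big[Rplus/0]_(i <- [::]) F i s) = fct_cte 0.
    by apply: functional_extensionality => s; rewrite big_nil.
  rewrite big_nil; exact: derivable_pt_lim_const.
have -> : (fun s => \big[Rplus/0]_(i <- a :: r) F i s) =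
   plus_fct (F a) (fun s => \big[Rplus/0]_(i <- r) F i s).
  by apply: functional_extensionality => s; rewrite big_cons.
rewrite big_cons; exact: derivable_pt_lim_plus.
Qed.

Lemma deriv_sumR (I : finType) (F : I -> R -> R) (F' : I -> R) x :
  (forall i, derivable_pt_lim (F i) x (F' i)) ->
  derivable_pt_lim (fun s => sumR (fun i => F i s)) x (sumR F').
Proof. move=> H; rewrite /sumR; exact: deriv_big. Qed.

Lemma dlin a b x : derivable_pt_lim (fun s => a + s * b) x b.
Proof.
move=> eps Heps; exists (mkposreal 1 Rlt_0_1) => h Hh _.
replace ((a + (x + h) * b - (a + x * b)) / h - b) with 0 by (field; exact Hh).
rewrite Rabs_R0; lra.
Qed.

Lemma dmax f l : derivable_pt_lim f 0 l -> (exists r, 0 < r /\ forall s, -r < s < r -> f s <= f 0) -> l = 0.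
Proof.
move=> H [r [Hr Hm]].
have := deriv_maximum f (-r) r 0 (exist _ l H) ltac:(lra) ltac:(lra) ltac:(move=> s ? ?; apply: Hm; lra).
by [].
Qed.

Lemma dl_eq f x l1 l2 : derivable_pt_lim f x l1 -> l1 = l2 -> derivable_pt_lim f x l2.
Proof. by move=> H <-. Qed.

Lemma dterm (q0 dq : R) (M : R -> R) dm m :
  0 < q0 -> M 0 = m -> 0 < m -> derivable_pt_lim M 0 dm ->
  derivable_pt_lim (fun s => (q0 + s * dq) * ln ((q0 + s * dq) / M s)) 0
     (dq * ln (q0 / m) + dq - dm * (q0 / m)).
Proof.
move=> Hq HM0 Hm HM.
have H1 := dlin q0 dq 0.
have Hne : M 0 <> 0 by lra.
have H2 := derivable_pt_lim_div _ _ _ _ _ H1 HM Hne.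
have Hp : 0 < (q0 + 0 * dq) / M 0.
  rewrite Rmult_0_l Rplus_0_r HM0; apply: Rdiv_lt_0_compat => //.
have H3 := derivable_pt_lim_comp _ ln 0 _ _ H2 (derivable_pt_lim_ln _ Hp).
have H4 := derivable_pt_lim_mult _ _ 0 _ _ H1 H3.
eapply dl_eq; [exact H4|].
rewrite /comp /div_fct Rmult_0_l Rplus_0_r HM0 /Rsqr; field; lra.
Qed.

Section Main.
Variables T X Y : finType.

Definition qs (Qt D : jdist T X Y) (s : R) : jdist T X Y :=
  fun t x y => Qt t x y + s * D t x y.

Lemma qs0 Qt D : qs Qt D 0 = Qt.
Proof.
apply: functional_extensionality => t; apply: functional_extensionality => x;
apply: functional_extensionality => y; rewrite /qs; ring.
Qed.

Lemma condH_pos (Q : jdist T X Y) : (forall t x y, 0 < Q t x y) ->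
  condH_T_XY Q = - sumR (fun t => sumR (fun x => sumR (fun y =>
       Q t x y * ln (Q t x y / mXY Q x y)))).
Proof.
move=> H; rewrite /condH_T_XY; f_equal; apply: sumR_ext => t; apply: sumR_ext => x;
apply: sumR_ext => y; case: Rlt_dec => // /(_ (H t x y)) [].
Qed.

Lemma mXY_pos (Q : jdist T X Y) (t : T) (x : X) (y : Y) : (forall t x y, 0 < Q t x y) -> 0 < mXY Q x y.
Proof.
move=> H; have := @term_le_sumR _ (fun t => Q t x y) t (fun i => Rlt_le _ _ (H i x y)).
have := H t x y; rewrite /mXY; lra.
Qed.

Lemma first_order (Qt D : jdist T X Y) :
 (forall t x y, 0 < Qt t x y) ->
 (exists r, 0 < r /\ forall s, -r < s < r ->
     (forall t x y, 0 < qs Qt D s t x y) /\ condH_T_XY (qs Qt D s) <= condH_T_XY Qt) ->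
 sumR (fun t => sumR (fun x => sumR (fun y =>
   D t x y * ln (Qt t x y / mXY Qt x y) + D t x y
     - sumR (fun t' => D t' x y) * (Qt t x y / mXY Qt x y)))) = 0.
Proof.
move=> Hpos [r [Hr Hm]].
set S := sumR _.
suff : - S = 0 by lra.
apply: (@dmax (fun s => - sumR (fun t => sumR (fun x => sumR (fun y =>
   qs Qt D s t x y * ln (qs Qt D s t x y / mXY (qs Qt D s) x y)))))).
  apply: (derivable_pt_lim_opp (fun s => sumR (fun t => sumR (fun x => sumR (fun y =>
   qs Qt D s t x y * ln (qs Qt D s t x y / mXY (qs Qt D s) x y)))))).
  apply: deriv_sumR => t; apply: deriv_sumR => x; apply: deriv_sumR => y.
  apply: dterm.
  - exact: Hpos.
  - by rewrite qs0.
  - exact: mXY_pos.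
  - rewrite /mXY /qs; apply: (@deriv_sumR _ (fun tt s => Qt tt x y + s * D tt x y)) => tt.
    exact: dlin.
exists r; split => // s Hs.
have [Hp Hle] := Hm s Hs.
rewrite qs0 -condH_pos // -condH_pos //.
Qed.


Definition S3 (F : T -> X -> Y -> R) := sumR (fun t => sumR (fun x => sumR (fun y => F t x y))).

Lemma S3_split (F G H : T -> X -> Y -> R) :
  S3 (fun t x y => F t x y + G t x y - H t x y) = S3 F + S3 G - S3 H.
Proof.
rewrite /S3 -sumR_add -sumR_sub; apply: sumR_ext => t.
rewrite -sumR_add -sumR_sub; apply: sumR_ext => x.
by rewrite -sumR_add -sumR_sub.
Qed.

Lemma sumR_d2 (G : X -> Y -> R) (x1 x2 : X) (y1 y2 : Y) :
  sumR (fun x => sumR (fun y => ((e x1 x - e x2 x) * (e y1 y - e y2 y)) * G x y))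
  = G x1 y1 - G x1 y2 - G x2 y1 + G x2 y2.
Proof.
rewrite (@sumR_ext _ _ (fun x => (e x1 x - e x2 x) * (G x y1 - G x y2))).
  rewrite sumR_de; ring.
move=> x; rewrite -sumR_de -sumR_scal; apply: sumR_ext => y; ring.
Qed.

Definition Dd (t0 : T) (x1 x2 : X) (y1 y2 : Y) : jdist T X Y :=
  fun t x y => e t0 t * ((e x1 x - e x2 x) * (e y1 y - e y2 y)).

Lemma S_eval (Qt : jdist T X Y) t0 x1 x2 y1 y2 :
  (forall t x y, 0 < Qt t x y) ->
  let D := Dd t0 x1 x2 y1 y2 in
  let c x y := ln (Qt t0 x y / mXY Qt x y) in
  sumR (fun t => sumR (fun x => sumR (fun y =>
   D t x y * ln (Qt t x y / mXY Qt x y) + D t x y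
     - sumR (fun t' => D t' x y) * (Qt t x y / mXY Qt x y))))
  = c x1 y1 - c x1 y2 - c x2 y1 + c x2 y2.
Proof.
move=> Hpos D c.
set d := fun x y => (e x1 x - e x2 x) * (e y1 y - e y2 y).
have HD : forall x y, sumR (fun t' => D t' x y) = d x y.
  move=> x y; exact: (sumR_e _ t0 (fun _ => d x y)).
rewrite (_ : sumR _ = S3 (fun t x y => e t0 t * (d x y * ln (Qt t x y / mXY Qt x y))
    + e t0 t * (d x y * 1) - d x y / mXY Qt x y * Qt t x y)); last first.
  rewrite /S3; apply: sumR_ext => t; apply: sumR_ext => x; apply: sumR_ext => y.
  rewrite HD /D /Dd -/(d x y); field.
  have := mXY_pos Qt t x y Hpos; lra.
rewrite S3_split.
have Hpull : forall (G : T -> X -> Y -> R),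
  S3 (fun t x y => e t0 t * (d x y * G t x y)) = sumR (fun x => sumR (fun y => d x y * G t0 x y)).
  move=> G; rewrite /S3 -(sumR_e _ t0 (fun t => sumR (fun x => sumR (fun y => d x y * G t x y)))).
  apply: sumR_ext => t; rewrite -sumR_scal; apply: sumR_ext => x; by rewrite -sumR_scal.
rewrite (Hpull (fun t x y => ln (Qt t x y / mXY Qt x y))) (Hpull (fun _ _ _ => 1)).
rewrite /d !sumR_d2.
have -> : S3 (fun t x y => d x y / mXY Qt x y * Qt t x y) = 0.
  rewrite /S3 sumR_exch (@sumR_ext _ _ (fun x => sumR (fun y => d x y * 1))).
    by rewrite /d sumR_d2; ring.
  move=> x; rewrite sumR_exch; apply: sumR_ext => y.
  rewrite sumR_scal -/(mXY Qt x y); field.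
  have := mXY_pos Qt t0 x y Hpos; lra.
rewrite /c; ring.
Qed.


Lemma admissible (P Qt : jdist T X Y) t0 x1 x2 y1 y2 :
  DeltaP P Qt -> (forall t x y, 0 < Qt t x y) ->
  exists r, 0 < r /\ forall s, -r < s < r ->
    (forall t x y, 0 < qs Qt (Dd t0 x1 x2 y1 y2) s t x y) /\
    DeltaP P (qs Qt (Dd t0 x1 x2 y1 y2) s).
Proof.
move=> [[Hnn Hsum] [HTX HTY]] Hpos.
set r := Rmin (Rmin (Qt t0 x1 y1) (Qt t0 x1 y2)) (Rmin (Qt t0 x2 y1) (Qt t0 x2 y2)).
have H11 : r <= Qt t0 x1 y1 by rewrite /r; do 2 apply: Rle_trans (Rmin_l _ _) _; lra.
have H12 : r <= Qt t0 x1 y2.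
  rewrite /r; apply: Rle_trans (Rmin_l _ _) _; apply: Rle_trans (Rmin_r _ _) _; lra.
have H21 : r <= Qt t0 x2 y1.
  rewrite /r; apply: Rle_trans (Rmin_r _ _) _; apply: Rle_trans (Rmin_l _ _) _; lra.
have H22 : r <= Qt t0 x2 y2 by rewrite /r; do 2 apply: Rle_trans (Rmin_r _ _) _; lra.
have Hr : 0 < r.
  rewrite /r; apply: Rmin_pos; apply: Rmin_pos; exact: Hpos.
exists r; split => // s Hs.
have Hp : forall t x y, 0 < qs Qt (Dd t0 x1 x2 y1 y2) s t x y.
  move=> t x y; have := Hpos t x y; rewrite /qs /Dd /e.
  by repeat (case: eqP => ?; subst); lra.
have HTX' : forall t x, mTX (qs Qt (Dd t0 x1 x2 y1 y2) s) t x = mTX Qt t x.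
  move=> t x; rewrite /mTX /qs sumR_add sumR_scal.
  rewrite (@sumR_ext _ (fun y => Dd t0 x1 x2 y1 y2 t x y) (fun y => (e y1 y - e y2 y) * (e t0 t * (e x1 x - e x2 x)))).
    by rewrite sumR_de (_ : forall a, a - a = 0) ?Rmult_0_r ?Rplus_0_r // => a; ring.
  move=> y; rewrite /Dd; ring.
have HTY' : forall t y, mTY (qs Qt (Dd t0 x1 x2 y1 y2) s) t y = mTY Qt t y.
  move=> t y; rewrite /mTY /qs sumR_add sumR_scal.
  rewrite (@sumR_ext _ (fun x => Dd t0 x1 x2 y1 y2 t x y) (fun x => (e x1 x - e x2 x) * (e t0 t * (e y1 y - e y2 y)))).
    rewrite sumR_de; ring.
  move=> x; rewrite /Dd; ring.
split => //; split; last first.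
  split=> ? ?; [rewrite HTX'|rewrite HTY']; exact: HTX || exact: HTY.
split; first by move=> t x y; apply: Rlt_le; exact: Hp.
rewrite -Hsum; apply: sumR_ext => t; apply: sumR_ext => x; exact: HTX'.
Qed.

Lemma mult_rel (P Qt : jdist T X Y) t0 x1 x2 y1 y2 :
  DeltaP P Qt -> (forall t x y, 0 < Qt t x y) ->
  (forall Q, DeltaP P Q -> condH_T_XY Q <= condH_T_XY Qt) ->
  let u x y := Qt t0 x y / mXY Qt x y in
  u x1 y1 * u x2 y2 = u x1 y2 * u x2 y1.
Proof.
move=> HD Hpos Hmax u.
have Hex : exists r, 0 < r /\ forall s, -r < s < r ->
     (forall t x y, 0 < qs Qt (Dd t0 x1 x2 y1 y2) s t x y) /\
     condH_T_XY (qs Qt (Dd t0 x1 x2 y1 y2) s) <= condH_T_XY Qt.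
  have [r [Hr Hs]] := admissible t0 x1 x2 y1 y2 HD Hpos.
  exists r; split => // s Hrs; have [Hp HDs] := Hs s Hrs; split => //; exact: Hmax.
have := first_order Hpos Hex.
have := S_eval Qt t0 x1 x2 y1 y2 Hpos; simpl => ->.
have Hu : forall x y, 0 < u x y.
  move=> x y; apply: Rdiv_lt_0_compat; [exact: Hpos|exact: (mXY_pos Qt t0)].
move=> H.
apply: ln_inv; try (apply: Rmult_lt_0_compat; exact: Hu).
rewrite (ln_mult _ _ (Hu x1 y1) (Hu x2 y2)) (ln_mult _ _ (Hu x1 y2) (Hu x2 y1)) /u; lra.
Qed.


Lemma ln_ge z : 0 < z -> 1 - / z <= ln z.
Proof.
move=> Hz; have := exp_ineq1_le (ln (/ z)).
rewrite exp_ln; last exact: Rinv_0_lt_compat.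
rewrite ln_Rinv //; lra.
Qed.

Lemma inv_nonneg a : 0 <= a -> 0 <= / a.
Proof.
move=> Ha; case: (Req_dec a 0) => [->|Hne]; first by rewrite Rinv_0; lra.
apply: Rlt_le; apply: Rinv_0_lt_compat; lra.
Qed.

Lemma aia a : a * / a * a = a.
Proof. case: (Req_dec a 0) => [->|Hne]; first ring. field; exact: Hne. Qed.

Lemma condI1_nonneg (Q : jdist T X Y) : is_dist Q -> 0 <= condI_TX_Y Q.
Proof.
move=> [Hnn Hsum].
have Hsub : sumR (fun t => sumR (fun x => sumR (fun y =>
    Q t x y - mTY Q t y * mXY Q x y * / mY Q y))) = 0.
  rewrite (@sumR_ext _ _ (fun t => sumR (fun x => sumR (fun y => Q t x y)) -
       sumR (fun x => sumR (fun y => mTY Q t y * mXY Q x y * / mY Q y)))); last first.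
    move=> t; rewrite -sumR_sub; apply: sumR_ext => x; by rewrite -sumR_sub.
  rewrite sumR_sub Hsum.
  rewrite (@sumR_ext _ _ (fun t => sumR (fun y => sumR (fun x => mTY Q t y * mXY Q x y * / mY Q y))));
    last by move=> t; rewrite sumR_exch.
  rewrite sumR_exch.
  rewrite (@sumR_ext _ _ (fun y => mY Q y)).
    have -> : sumR (fun y => mY Q y) = 1.
      rewrite /mY sumR_exch -Hsum; apply: sumR_ext => t; exact: sumR_exch.
    ring.
  move=> y.
  have HmY : sumR (fun x => mXY Q x y) = mY Q y by rewrite /mY /mXY sumR_exch.
  rewrite (@sumR_ext _ _ (fun t => mTY Q t y * / mY Q y * mY Q y)).
    rewrite (@sumR_ext _ _ (fun t => (/ mY Q y * mY Q y) * mTY Q t y)); last by move=> t; ring.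
    rewrite sumR_scal -/(mY Q y) (Rmult_comm (/ _)); exact: aia.
  move=> t; rewrite -HmY -sumR_scal; apply: sumR_ext => x; ring.
rewrite -Hsub; apply: sumR_le => t; apply: sumR_le => x; apply: sumR_le => y.
have HmTY : 0 <= mTY Q t y by apply: sumR_ge0 => ?; exact: Hnn.
have HmXY : 0 <= mXY Q x y by apply: sumR_ge0 => ?; exact: Hnn.
have HmY : 0 <= mY Q y by apply: sumR_ge0 => ?; apply: sumR_ge0 => ?; exact: Hnn.
case: Rlt_dec => Hq /=; last first.
  have H0 : Q t x y = 0 by have := Hnn t x y; lra.
  have := inv_nonneg HmY; have := Rmult_le_pos _ _ HmTY HmXY => h1 h2.
  have := Rmult_le_pos _ _ h1 h2; lra.
have H1 : Q t x y <= mTY Q t y by apply: (@term_le_sumR _ (fun x => Q t x y)) => ?; exact: Hnn.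
have H2 : Q t x y <= mXY Q x y by apply: (@term_le_sumR _ (fun t => Q t x y)) => ?; exact: Hnn.
have H3 : mTY Q t y <= mY Q y.
  apply: (@term_le_sumR _ (fun t => mTY Q t y)) => ?; apply: sumR_ge0 => ?; exact: Hnn.
have Hz : 0 < Q t x y * mY Q y / (mTY Q t y * mXY Q x y).
  apply: Rdiv_lt_0_compat; apply: Rmult_lt_0_compat; lra.
have := Rmult_le_compat_l _ _ _ (Rlt_le _ _ Hq) (ln_ge Hz).
have -> : Q t x y * (1 - / (Q t x y * mY Q y / (mTY Q t y * mXY Q x y))) =
   Q t x y - mTY Q t y * mXY Q x y * / mY Q y.
  field; repeat split; lra.
lra.
Qed.

Lemma CI1_zero (Q : jdist T X Y) : (forall t x y, 0 <= Q t x y) ->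
  CI_TX_given_Y Q -> condI_TX_Y Q = 0.
Proof.
move=> Hnn H; rewrite /condI_TX_Y (@sumR_ext _ _ (fun _ => 0)) ?sumR_0 // => t.
rewrite (@sumR_ext _ _ (fun _ => 0)) ?sumR_0 // => x.
rewrite (@sumR_ext _ _ (fun _ => 0)) ?sumR_0 // => y.
case: Rlt_dec => // Hq.
have H1 : Q t x y <= mTY Q t y by apply: (@term_le_sumR _ (fun x => Q t x y)) => ?; exact: Hnn.
have H3 : mTY Q t y <= mY Q y.
  apply: (@term_le_sumR _ (fun t => mTY Q t y)) => ?; apply: sumR_ge0 => ?; exact: Hnn.
have HmY : 0 < mY Q y by lra.
have Hne : mTY Q t y * mXY Q x y <> 0.
  rewrite -H; have := Rmult_lt_0_compat _ _ Hq HmY; lra.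
by rewrite H /Rdiv Rinv_r // ln_1 Rmult_0_r.
Qed.

End Main.

Lemma condI2_eq (T X Y : finType) (Q : jdist T X Y) :
  condI_TY_X Q = condI_TX_Y (fun (t : T) (y : Y) (x : X) => Q t x y).
Proof. rewrite /condI_TY_X /condI_TX_Y; apply: sumR_ext => t; rewrite sumR_exch; reflexivity. Qed.

Lemma swap_dist (T X Y : finType) (Q : jdist T X Y) :
  is_dist Q -> is_dist (fun (t : T) (y : Y) (x : X) => Q t x y).
Proof.
move=> [Hnn Hs]; split; first by move=> *; exact: Hnn.
rewrite -Hs; apply: sumR_ext => t; exact: sumR_exch.
Qed.

Lemma condI2_nonneg (T X Y : finType) (Q : jdist T X Y) : is_dist Q -> 0 <= condI_TY_X Q.
Proof. move=> H; rewrite condI2_eq; apply: condI1_nonneg; exact: swap_dist. Qed.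

Lemma CI2_zero (T X Y : finType) (Q : jdist T X Y) : (forall t x y, 0 <= Q t x y) ->
  CI_TY_given_X Q -> condI_TY_X Q = 0.
Proof.
move=> Hnn H; rewrite condI2_eq; apply: CI1_zero; first by move=> *; exact: Hnn.
move=> t y x; exact: H.
Qed.

Lemma dist_le1 (T X Y : finType) (Q : jdist T X Y) t x y : is_dist Q -> Q t x y <= 1.
Proof.
move=> [Hnn <-].
have nn2 : forall t x, 0 <= sumR (fun y => Q t x y) by move=> *; apply: sumR_ge0 => ?; exact: Hnn.
have nn1 : forall t, 0 <= sumR (fun x => sumR (fun y => Q t x y)) by move=> *; apply: sumR_ge0 => ?; exact: nn2.
apply: (Rle_trans _ _ _ (@term_le_sumR _ (fun y => Q t x y) y (fun i => Hnn t x i))).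
apply: (Rle_trans _ _ _ (@term_le_sumR _ (fun x => sumR (fun y => Q t x y)) x (nn2 t))).
exact: (@term_le_sumR _ (fun t => sumR (fun x => sumR (fun y => Q t x y))) t nn1).
Qed.

Lemma interior_pos (T X Y : finType) (P Qt : jdist T X Y) :
  full_supp_DeltaP P -> rel_interior_DeltaP P Qt -> forall t x y, 0 < Qt t x y.
Proof.
move=> Hfull [HDQ [eps [He Hint]]] t x y.
have [Q [HQ HQp]] := Hfull t x y.
set d := eps / 2.
have Hd : 0 < d by rewrite /d; lra.
have Hde : eps = 2 * d by rewrite /d; field.
set l := [:: (1 + d, Qt); (- d, Q)].
have Hval : forall t x y, aff_comb l t x y = (1 + d) * Qt t x y + (- d) * Q t x y.
  by move=> *; rewrite /aff_comb !big_cons big_nil /=; ring.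
have Hin : in_aff_DeltaP P (aff_comb l).
  exists l; split; last split => //.
    by move=> p /= [<-|[<-|[]]].
  by rewrite !big_cons big_nil /=; ring.
have HDl : DeltaP P (aff_comb l).
  apply: Hint => // t' x' y'; rewrite Hval.
  have := dist_le1 t' x' y' HDQ.1; have := dist_le1 t' x' y' HQ.1.
  have := HDQ.1.1 t' x' y'; have := HQ.1.1 t' x' y' => h1 h2 h3 h4.
  have -> : (1 + d) * Qt t' x' y' + - d * Q t' x' y' - Qt t' x' y' = d * (Qt t' x' y' - Q t' x' y') by ring.
  have g1 := Rmult_le_compat_l d _ _ (Rlt_le _ _ Hd) (_ : Qt t' x' y' - Q t' x' y' <= 1).
  have g2 := Rmult_le_compat_l d _ _ (Rlt_le _ _ Hd) (_ : -1 <= Qt t' x' y' - Q t' x' y').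
  apply: Rabs_def1.
    have := g1 ltac:(lra); lra.
  have := g2 ltac:(lra); lra.
have := HDl.1.1 t x y; rewrite Hval.
have := HDQ.1.1 t x y => h1 h2.
have := Rmult_lt_0_compat _ _ Hd HQp; nra.
Qed.

Lemma two_elems (T : finType) : #|T| = 2%nat ->
  exists t0 t1 : T, t0 != t1 /\ forall t, t = t0 \/ t = t1.
Proof.
rewrite cardE => Hs.
have Hu := enum_uniq T.
have Hm := mem_enum T.
move: Hs Hu Hm; case: (enum T) => [|a [|b [|c l]]] //= _.
rewrite inE andbT => Hab Hm; exists a, b; split => //.
move=> t; have : t \in [:: a; b] by rewrite Hm.
by rewrite !inE => /orP [/eqP ->|/eqP ->]; [left|right].
Qed.

Lemma sum2 (T : finType) (t0 t1 : T) (F : T -> R) :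
  t0 != t1 -> (forall t, t = t0 \/ t = t1) -> sumR F = F t0 + F t1.
Proof.
move=> Hne Hc; rewrite /sumR (bigD1 t0) //=; congr (_ + _).
apply: big_pred1 => i /=; case: (Hc i) => ->; first by rewrite eqxx (negbTE Hne).
by rewrite eq_sym Hne eqxx.
Qed.

Lemma comb (X Y : finType) (v : X -> Y -> R) :
  (forall x x' y y', v x y * v x' y' = v x y' * v x' y) ->
  (forall x x' y y', (1 - v x y) * (1 - v x' y') = (1 - v x y') * (1 - v x' y)) ->
  (forall x y y', v x y = v x y') \/ (forall x x' y, v x y = v x' y).
Proof.
move=> H1 H2.
have K : forall x x' y y', (v x y - v x y') * (v x y - v x' y) = 0.
  move=> x x' y y'; have h1 := H1 x x' y y'; have h2 := H2 x x' y y'.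
  have E : v x y + v x' y' - (v x y' + v x' y) = 0 by nra.
  have -> : (v x y - v x y') * (v x y - v x' y) =
    v x y * (v x y + v x' y' - (v x y' + v x' y)) + (v x y' * v x' y - v x y * v x' y') by ring.
  rewrite E h1; ring.
case: (classic (forall x y y', v x y = v x y')) => [h|h]; first by left.
right.
have [x0 Hx0] := not_all_ex_not _ _ h.
have [y1 Hy1] := not_all_ex_not _ _ Hx0.
have [y2 Hy2] := not_all_ex_not _ _ Hy1.
suff S : forall x y, v x y = v x0 y by move=> x x' y; rewrite S (S x').
move=> x y.
case: (Req_dec (v x0 y) (v x0 y1)) => E.
  have := K x0 x y y2 => /Rmult_integral [|]; [move=> *; exfalso; apply: Hy2; lra|lra].
have := K x0 x y y1 => /Rmult_integral [|]; lra.
Qed.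

Unset Implicit Arguments.

Theorem mainTheorem12 (T X Y : finType) (P Qt : jdist T X Y) :
  #|T| = 2%nat ->
  is_dist P ->
  full_supp_DeltaP P ->
  rel_interior_DeltaP P Qt ->
  (forall Q, DeltaP P Q -> condH_T_XY Q <= condH_T_XY Qt) ->
  (CI_TX_given_Y Qt \/ CI_TY_given_X Qt) /\
  (UI_X_minus_Y P 0 \/ UI_Y_minus_X P 0).
Proof.
move=> Hc HP Hfull Hint Hmax.
have Hpos := interior_pos Hfull Hint.
have HD := Hint.1.
have [t0 [t1 [Hne Hcov]]] := two_elems Hc.
have Hm0 : forall x y, 0 < mXY Qt x y := fun x y => @mXY_pos T X Y Qt t0 x y Hpos.
pose u t x y := Qt t x y / mXY Qt x y.
have HQ : forall t x y, Qt t x y = u t x y * mXY Qt x y.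
  by move=> t x y; rewrite /u; field; have := Hm0 x y; lra.
have Hs1 : forall x y, u t1 x y = 1 - u t0 x y.
  move=> x y; rewrite /u; have := @sum2 T t0 t1 (fun t => Qt t x y) Hne Hcov.
  rewrite -/(mXY Qt x y) => E; have := Hm0 x y => hm.
  have -> : Qt t1 x y = mXY Qt x y - Qt t0 x y by lra.
  field; lra.
have Hmul : forall t x1 x2 y1 y2, u t x1 y1 * u t x2 y2 = u t x1 y2 * u t x2 y1.
  move=> t x1 x2 y1 y2; exact: (@mult_rel T X Y P Qt t x1 x2 y1 y2 HD Hpos Hmax).
have Hcomb : (forall x y y', u t0 x y = u t0 x y') \/ (forall x x' y, u t0 x y = u t0 x' y).
  apply: comb; first exact: Hmul.
  move=> x x' y y'; rewrite -!Hs1; exact: Hmul.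
have HCI : CI_TX_given_Y Qt \/ CI_TY_given_X Qt.
  case: Hcomb => [Hy|Hx].
    have Ut : forall t x y y', u t x y = u t x y'.
      by move=> t x y y'; case: (Hcov t) => ->; [exact: Hy| rewrite !Hs1 (Hy x y y')].
    right => t x y.
    have E : mTX Qt t x = u t x y * mX Qt x.
      rewrite /mTX (@sumR_ext _ _ (fun y' => u t x y * mXY Qt x y')); last first.
        by move=> y'; rewrite HQ (Ut t x y' y).
      by rewrite sumR_scal /mX /mXY sumR_exch.
    rewrite E {1}(HQ t x y); ring.
  have Ut : forall t x x' y, u t x y = u t x' y.
    by move=> t x x' y; case: (Hcov t) => ->; [exact: Hx| rewrite !Hs1 (Hx x x' y)].
  left => t x y.
  have E : mTY Qt t y = u t x y * mY Qt y.
    rewrite /mTY (@sumR_ext _ _ (fun x' => u t x y * mXY Qt x' y)); last first.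
      by move=> x'; rewrite HQ (Ut t x' x y).
    by rewrite sumR_scal /mY /mXY sumR_exch.
  rewrite E {1}(HQ t x y); ring.
split => //.
have Hnn : forall t x y, 0 <= Qt t x y by move=> t x y; exact: Rlt_le.
case: HCI => H; [left|right]; split.
- exists Qt; split => //; rewrite CI1_zero //.
- move=> s [Q [HQ' ->]]; apply: condI1_nonneg; exact: HQ'.1.
- exists Qt; split => //; rewrite CI2_zero //.
- move=> s [Q [HQ' ->]]; apply: condI2_nonneg; exact: HQ'.1.
Qed.
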